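(* Fix $s,b\ge1$, let $\{a_i\}$ be the $(s,b)$-Generacci sequence, and let $p_{n,k}$ denote the number of integers in $[0,a_{nb+1})$ whose $(s,b)$-Generacci legal decomposition contains exactly $k$ summands. Then for all $k\ge1$ and $n\ge1+(k-1)(s+1)$, \[p_{n,k}=b^k\binom{n-s(k-1)}{k}.\]
   Context: Fix integers $s,b\ge1$. For an increasing sequence of positive integers $\{a_i\}_{i\ge1}$ define bins $\mathcal{B}_n=\{a_{b(n-1)+1},\dots,a_{bn}\}$ for $n\ge1$, $\mathcal{B}_j=\emptyset$ for $j\le 0$. A decomposition $m=a_{\ell_1}+\dots+a_{\ell_k}$ with $a_{\ell_1}>\dots>a_{\ell_k}$ is an $(s,b)$-Generacci legal decomposition if $\{a_{\ell_i},a_{\ell_{i+1}}\}\not\subset\mathcal{B}_{j-s}\cup\dots\cup\mathcal{B}_j$ for all $i,j$. The $(s,b)$-Generacci sequence is the increasing sequence in which each $a_i$ is the smallest positive integer with no legal decomposition using $a_1,\dots,a_{i-1}$; every nonnegative integer has a unique legal decomposition. *)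

(* Defs.v *)
From mathcomp Require Import all_boot.
From mathcomp Require Import boolp.
Set Implicit Arguments. Unset Strict Implicit. Unset Printing Implicit Defensive.

(* Sequences are a : nat -> nat, indexed from 1 (a 0 is unused).
   Index l >= 1 lies in bin B_{bin b l}, since
   B_n = {a_{b(n-1)+1}, ..., a_{bn}}. *)
Definition bin (b l : nat) : nat := (l.-1 %/ b).+1.

(* Two consecutive summands a_x > a_y (x > y indices) of a decomposition are
   allowed iff they do not both lie in some window B_{j-s} u ... u B_j.
   Since bins with index <= 0 are empty and every index has bin >= 1, such a
   window exists iff bin y + s >= bin x; so the step is legal iff
   bin y + s < bin x. *)
Definition legal_step (s b : nat) (x y : nat) : bool :=
  (y < x) && (bin b y + s < bin b x).

Definition is_legal_decomp (s b : nat) (a : nat -> nat) (m : nat) (l : seq nat) : Prop :=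
  all (fun i => 0 < i) l /\ sorted (legal_step s b) l /\ \sum_(i <- l) a i = m.

Definition representable_below (s b : nat) (a : nat -> nat) (i m : nat) : Prop :=
  exists l, is_legal_decomp s b a m l /\ all (fun j => j < i) l.

Definition is_generacci (s b : nat) (a : nat -> nat) : Prop :=
  (forall i, 0 < i -> a i < a i.+1) /\
  forall i, 0 < i ->
    [/\ 0 < a i,
        ~ representable_below s b a i (a i) &
        forall m, 0 < m -> m < a i -> representable_below s b a i m].

Definition p_count (s b : nat) (a : nat -> nat) (n k : nat) : nat :=
  #|[set m : 'I_(a (n * b).+1) |
      `[< exists l, is_legal_decomp s b a m l /\ size l = k >] ]|.

(* Main.v *)
Require Import Defs.
From mathcomp Require Import all_boot.
From mathcomp Require Import boolp zify.
Set Implicit Arguments. Unset Strict Implicit. Unset Printing Implicit Defensive.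

Definition T (s b x : nat) : nat := b * (bin b x - s - 1).
Definition good (s b : nat) (l : seq nat) : bool :=
  all (fun i => 0 < i) l && sorted (legal_step s b) l.

Lemma legal_T s b x y : 0 < b -> 0 < y -> legal_step s b x y = (y <= T s b x).
Proof.
move=> b0 y0; rewrite /legal_step /T /bin.
set qx := (x.-1 %/ b); set qy := (y.-1 %/ b).
rewrite (_ : qx.+1 - s - 1 = qx - s); last by lia.
have E1: (qy.+1 + s < qx.+1) = (qy < qx - s) by apply/idP/idP; lia.
rewrite E1 /qy ltn_divLR // [b * _]mulnC.
have H1 : qx * b <= x.-1 by rewrite leq_divM.
have H2 : (qx - s) * b <= qx * b by rewrite leq_mul2r leq_subr orbT.
apply/idP/idP.
- by move/andP=> [_ H]; lia.
- by move=> H; apply/andP; split; lia.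
Qed.

Lemma T_lt s b x : 0 < x -> T s b x < x.
Proof.
move=> x0; rewrite /T /bin.
have H1 : x.-1 %/ b * b <= x.-1 by rewrite leq_divM.
set q := x.-1 %/ b in H1 *.
have H2 : b * (q.+1 - s - 1) <= q * b.
  by rewrite mulnC leq_mul2r; apply/orP; right; lia.
move: H1 H2; set c := b * _; set d := q * b; lia.
Qed.

Lemma legal_trans s b : transitive (legal_step s b).
Proof.
move=> y x z /andP [H1 H2] /andP [H3 H4]; apply/andP; split; lia.
Qed.

Lemma good_cons s b x l : 0 < b ->
  good s b (x :: l) = [&& 0 < x, good s b l & all (fun y => y <= T s b x) l].
Proof.
move=> b0; rewrite /good /= (path_sortedE (@legal_trans s b)).
case Hp: (all (fun i => 0 < i) l); last by rewrite !andbF.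
rewrite (@eq_in_all _ _ (fun y => y <= T s b x)); first by case: (0 < x); case: (sorted _ _); case: (all _ _).
by move=> y Hy; rewrite legal_T //; move/allP: Hp => /(_ y Hy).
Qed.

Lemma good_head s b x l : 0 < b -> good s b (x :: l) -> all (fun y => y < x) l.
Proof.
move=> b0; rewrite good_cons // => /and3P [x0 _ /allP H]; apply/allP=> y /H Hy.
by have := T_lt s b x0; lia.
Qed.
Section Gen.
Variables (s b : nat) (a : nat -> nat).
Hypothesis b0 : 0 < b.
Hypothesis H : is_generacci s b a.

Local Notation sumA l := (\sum_(i <- l) a i).

Lemma mono_lt i j : 0 < i -> i < j -> a i < a j.
Proof.
move=> i0; elim: j => // j IH; rewrite ltnS leq_eqVlt => /orP [/eqP <- | ij].
  by apply: H.1.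
by apply: ltn_trans (IH ij) _; apply: H.1; lia.
Qed.

Lemma mono_le i j : 0 < i -> i <= j -> a i <= a j.
Proof.
move=> i0; rewrite leq_eqVlt => /orP [/eqP-> // | h]; exact: ltnW (mono_lt i0 h).
Qed.

Lemma apos i : 0 < i -> 0 < a i.
Proof. by move=> i0; case: (H.2 i i0). Qed.

Lemma gap x : 0 < x -> a x + a (T s b x).+1 <= a x.+1.
Proof.
move=> x0; rewrite leqNgt; apply/negP => Hlt.
have hx := mono_lt x0 (ltnSn x).
set d := a x.+1 - a x.
have d0 : 0 < d by rewrite /d subn_gt0.
have dlt : d < a (T s b x).+1 by rewrite /d; lia.
case: (H.2 (T s b x).+1 erefl) => _ _ /(_ d d0 dlt) [l [[Hpos [Hsort Hsum]] Hall]].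
case: (H.2 x.+1 erefl) => _ Hnot _; apply: Hnot.
exists (x :: l); split; last first.
  rewrite /= ltnSn /=; apply/allP => y /(allP Hall); have := T_lt s b x0; lia.
have Hg : good s b (x :: l).
  rewrite good_cons // x0 /good Hpos Hsort /=; apply/allP => y /(allP Hall); lia.
move: Hg => /andP [Hp Hs]; split => //; split => //.
rewrite big_cons Hsum /d; lia.
Qed.

Lemma UB l : good s b l -> forall i, 0 < i -> all (fun y => y < i) l -> sumA l < a i.
Proof.
elim: l => [|x l IH] Hg i i0 Hall; first by rewrite big_nil apos.
move: (Hg); rewrite good_cons // => /and3P [x0 Hgl Hl].
have Hs : sumA l < a (T s b x).+1.
  by apply: IH => //; apply/allP => y /(allP Hl).
rewrite big_cons.
have := gap x0.
have hxi : x < i by move: Hall => /= /andP [].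
have := mono_le (ltn0Sn x) hxi.
lia.
Qed.

Lemma good_uniq l1 l2 : good s b l1 -> good s b l2 -> sumA l1 = sumA l2 -> l1 = l2.
Proof.
have side : forall x l y, good s b (x :: l) -> x < y -> sumA (x :: l) < a y.
  move=> x l y Hg xy; apply: (@leq_trans (a x.+1)).
    apply: UB => //; rewrite /= ltnSn /=; apply/allP => z /(allP (good_head b0 Hg)); lia.
  apply: mono_le => //.
have lower : forall y l, sumA (y :: l) >= a y by move=> y l; rewrite big_cons leq_addr.
elim: l1 l2 => [|x l1 IH] [|y l2] //.
- move=> _ Hg; rewrite big_nil => E; move: (lower y l2); rewrite -E.
  by move: Hg => /andP [/andP [y0 _] _]; have := apos y0; lia.
- move=> Hg _; rewrite big_nil => E; move: (lower x l1); rewrite E.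
  by move: Hg => /andP [/andP [x0 _] _]; have := apos x0; lia.
move=> Hg1 Hg2 E.
case: (ltngtP x y) => [xy|yx|xy].
- by have := side _ _ _ Hg1 xy; have := lower y l2; lia.
- by have := side _ _ _ Hg2 yx; have := lower x l1; lia.
subst y; congr cons; apply: IH.
- by move: Hg1; rewrite good_cons // => /and3P [].
- by move: Hg2; rewrite good_cons // => /and3P [].
by move: E; rewrite !big_cons => /addnI.
Qed.

Lemma exist_decomp N m : m < a N.+1 ->
  exists l, [/\ good s b l, all (fun y => y <= N) l & sumA l = m].
Proof.
move=> mlt; case: (posnP m) => [->|m0].
  by exists [::]; rewrite big_nil.
case: (H.2 N.+1 erefl) => _ _ /(_ m m0 mlt) [l [[Hp [Hs Hsum]] Hall]].
by exists l; split => //; rewrite /good Hp Hs.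
Qed.

End Gen.
Fixpoint Lst (s b k : nat) : nat -> seq (seq nat) :=
  match k with
  | 0 => fun _ => [:: [::]]
  | k'.+1 => fix LM M := match M with
             | 0 => [::]
             | M'.+1 => LM M' ++ map (cons M'.+1) (Lst s b k' (T s b M'.+1))
             end
  end.

Lemma mem_cons_map (x y : nat) (l : seq nat) (S : seq (seq nat)) :
  (x :: l \in map (cons y) S) = (x == y) && (l \in S).
Proof.
apply/mapP/andP => [[l' Hl' [-> ->]] | [/eqP -> Hl]]; last by exists l.
by split.
Qed.

Lemma Lst_S s b k M : Lst s b k.+1 M.+1 = Lst s b k.+1 M ++ map (cons M.+1) (Lst s b k (T s b M.+1)).
Proof. by []. Qed.

Lemma mem_Lst s b k M l : 0 < b ->
  (l \in Lst s b k M) = [&& good s b l, all (fun i => i <= M) l & size l == k].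
Proof.
move=> b0; elim: k M l => [|k IHk] M l.
  by rewrite /= inE; case: l => //= x l; rewrite !andbF.
elim: M l => [|M IHM] l.
  by case: l => [|x l] //=; rewrite good_cons //; case: x => [|x] /=; rewrite in_nil ?andbF.
rewrite Lst_S mem_cat.
case: l => [|x l].
  rewrite IHM /=.
  by apply/mapP => [[? _ ]].
rewrite IHM mem_cons_map IHk /= eqSS.
case: (ltngtP x M.+1) => [xM | Mx | ->].
- rewrite orbF -ltnS xM /=.
  case Hg: (good s b (x :: l)) => //=.
  have := good_head b0 Hg => Hl.
  rewrite (@eq_in_all _ (leq^~ M) (leq^~ M.+1)) //.
  by move=> y /(allP Hl) yx /=; apply/idP/idP; lia.
- rewrite orbF (_ : x <= M = false) ?andbF //; lia.
- rewrite ltnn /= good_cons // ltn0Sn /=.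
  case Hg: (good s b l) => //=.
  case Ha: (all (fun y => y <= T s b M.+1) l) => /=.
    rewrite (@sub_all _ (fun y => y <= T s b M.+1)) //.
    by move=> y /= Hy; have := T_lt s b (ltn0Sn M); lia.
  by [].
Qed.

Lemma uniq_Lst s b k M : 0 < b -> uniq (Lst s b k M).
Proof.
move=> b0; elim: k M => [|k IHk] M //.
elim: M => [|M IHM] //.
rewrite Lst_S cat_uniq IHM /= map_inj_uniq ?IHk //; last by move=> ? ? [].
rewrite andbT; apply/hasPn => l /mapP [l' _ ->].
by rewrite -[X in _ \notin X]/(Lst s b k.+1 M) mem_Lst // /= ltnn andbF.
Qed.

Definition g (s b k n : nat) := b ^ k * 'C(n - s * (k - 1), k).

Lemma g_pascal s b k n : g s b k.+1 n + b * g s b k (n - s) = g s b k.+1 n.+1.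
Proof.
have E : 'C(n - s - s * (k - 1), k) = 'C(n - s * k, k).
  case: k => [|k]; first by rewrite !bin0.
  by rewrite subn1 /= -subnDA mulnS.
have Eb : 'C(n - s * k, k.+1) + 'C(n - s * k, k) = 'C(n.+1 - s * k, k.+1).
  case: (leqP (s * k) n) => h.
    by rewrite subSn // binS.
  rewrite (_ : n.+1 - s * k = 0); last by lia.
  rewrite (_ : n - s * k = 0); last by lia.
  case: k h {E} => [|k] h; first by rewrite muln0 in h.
  by rewrite !bin0n.
rewrite /g subn1 /= E -Eb expnS mulnDr.
set X := 'C(_, k.+1); set Y := 'C(_, k); set Z := b ^ k.
by rewrite !mulnA.
Qed.

Lemma size_Lst s b k n : 0 < b -> size (Lst s b k (n * b)) = g s b k n.
Proof.
move=> b0; elim: k n => [|k IHk] n; first by rewrite /g expn0 mul1n bin0.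
elim: n => [|n IHn]; first by rewrite mul0n /g sub0n bin0n muln0.
have key : forall r, r <= b -> size (Lst s b k.+1 (n * b + r)) = g s b k.+1 n + r * g s b k (n - s).
  elim => [|r IHr] rb; first by rewrite addn0 IHn mul0n addn0.
  rewrite addnS Lst_S size_cat IHr ?(ltnW rb) // size_map.
  have Tv : T s b (n * b + r).+1 = (n - s) * b.
    rewrite /T /bin /= (_ : (n * b + r) %/ b = n); last first.
      by rewrite divnMDl // divn_small // addn0.
    rewrite mulnC; congr (_ * _); lia.
  by rewrite Tv IHk mulSn; lia.
by rewrite mulSn addnC key // -g_pascal mulnC.
Qed.
Lemma card_ord_seq A (S : seq nat) : uniq S -> all (fun x => x < A) S ->
  #|[set m : 'I_A | val m \in S]| = size S.
Proof.
move=> US AS.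
rewrite -sum1_card (eq_bigl (fun i : 'I_A => val i \in S)); last by move=> i; rewrite inE.
rewrite -(big_mkord (fun i => i \in S) (fun _ => 1)) sum1_count -size_filter.
apply: perm_size; apply: uniq_perm => //; first by rewrite filter_uniq // iota_uniq.
move=> x; rewrite mem_filter mem_index_iota /=.
case Hx: (x \in S) => //=; by move/allP: AS => /(_ x Hx).
Qed.

Theorem propositionC1 (s b : nat) (a : nat -> nat) :
  0 < s -> 0 < b -> is_generacci s b a ->
  forall k n : nat, 1 <= k -> 1 + (k - 1) * (s + 1) <= n ->
  p_count s b a n k = b ^ k * 'C(n - s * (k - 1), k).
Proof.
move=> s0 b0 H k n _ _.
have -> : b ^ k * 'C(n - s * (k - 1), k) = g s b k n by [].
rewrite -(size_Lst s k n b0) -(size_map (fun l => \sum_(i <- l) a i)).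
set Ls := Lst s b k (n * b).
set S := map _ Ls.
have US : uniq S.
  rewrite map_inj_in_uniq ?uniq_Lst // => l1 l2.
  rewrite !mem_Lst // => /and3P [g1 _ _] /and3P [g2 _ _].
  exact: (good_uniq b0 H).
have AS : all (fun x => x < a (n * b).+1) S.
  apply/allP => x /mapP [l]; rewrite mem_Lst // => /and3P [gl al _] ->.
  apply: (UB b0 H) => //; apply/allP => y /(allP al) /=; lia.
rewrite -(card_ord_seq US AS); apply: eq_card => m; rewrite !inE.
apply/asboolP/mapP.
- move=> [l [[Hp [Hs Hsum]] Hsz]].
  have [l' [gl' al' sl']] := exist_decomp H (ltn_ord m).
  have gl : good s b l by rewrite /good Hp Hs.
  have E := good_uniq b0 H gl gl' (etrans Hsum (esym sl')); subst l'.
  by exists l; rewrite ?Hsum // mem_Lst // gl al' Hsz eqxx.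
- move=> [l]; rewrite mem_Lst // => /and3P [/andP [Hp Hs] _ /eqP Hsz] E.
  by exists l; split => //; split => //; split.
Qed.
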